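(* Let $\gamma\in\mathcal{K}^{\mathcal{P}^{-1}}$ and $\Psi\in\mathcal{K}_{\mathrm{FxT}}$. Then there exist $\lambda\ge1$ and $\tilde\Psi\in\mathcal{K}_{\mathrm{FxT}}$ such that $\lambda\gamma^{\lambda-1}(s)\gamma'(s)\Psi(s)\ge\tilde\Psi(\gamma^\lambda(s))$ for all $s>0$.
   Context: $\mathcal{K}_\infty$ is the set of continuous strictly increasing unbounded $\alpha:\mathbb{R}_{\ge0}\to\mathbb{R}_{\ge0}$ with $\alpha(0)=0$. $\mathcal{K}^{\mathcal{P}}$ is the set of $\alpha\in\mathcal{K}_\infty$ of the form $\alpha(s)=\sum_{i=1}^nc_is^{p_i}$ with real $c_i\neq0$, $p_i>0$, and $\alpha'(s)>0$ for all $s>0$. $\mathcal{K}^{\mathcal{P}^{-1}}$ is the set of $\alpha\in\mathcal{K}_\infty$ with $\alpha^{-1}\in\mathcal{K}^{\mathcal{P}}$. $\mathcal{K}_{\mathrm{FxT}}$ is the set of functions $c_1s^{p_1}+c_2s^{p_2}$ with $c_1,c_2>0$, $p_1\in(0,1)$, $p_2>1$. $\gamma^\lambda(s)$ denotes $(\gamma(s))^\lambda$. *)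

(* Defs.v *)
From Stdlib Require Import Reals Lra List.
From Coquelicot Require Import Coquelicot.
Open Scope R_scope.

(* s^p for s >= 0 and p > 0, with the convention 0^p = 0. *)
Definition rpow (x y : R) : R := if Rle_dec x 0 then 0 else Rpower x y.

(* K_infinity: functions R>=0 -> R>=0 (represented as R -> R, only values on
   [0,oo) matter): continuous, strictly increasing, unbounded, alpha 0 = 0. *)
Definition K_inf (a : R -> R) : Prop :=
  a 0 = 0 /\
  (forall s, 0 <= s -> 0 <= a s) /\
  (forall x, 0 <= x ->
     filterlim a (within (fun y => 0 <= y) (locally x)) (locally (a x))) /\
  (forall x y, 0 <= x -> x < y -> a x < a y) /\
  (forall M, exists s, 0 <= s /\ M < a s).

Definition gen_poly (l : list (R * R)) (s : R) : R :=
  fold_right (fun cp acc => fst cp * rpow s (snd cp) + acc) 0 l.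

Definition K_P (a : R -> R) : Prop :=
  K_inf a /\
  exists l : list (R * R),
    List.Forall (fun cp => fst cp <> 0 /\ 0 < snd cp) l /\
    (forall s, 0 <= s -> a s = gen_poly l s) /\
    (forall s, 0 < s -> 0 < Derive a s).

Definition K_Pinv (a : R -> R) : Prop :=
  K_inf a /\
  exists b : R -> R, K_P b /\
    (forall s, 0 <= s -> b (a s) = s) /\
    (forall s, 0 <= s -> a (b s) = s).

Definition K_FxT (P : R -> R) : Prop :=
  exists c1 c2 p1 p2 : R,
    0 < c1 /\ 0 < c2 /\ 0 < p1 < 1 /\ 1 < p2 /\
    forall s, 0 <= s -> P s = c1 * rpow s p1 + c2 * rpow s p2.

(* Main.v *)
Require Import Defs.
From Stdlib Require Import Reals.
From Coquelicot Require Import Coquelicot.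
From Stdlib Require Import Lra List Sorting.
Open Scope R_scope.

Lemma rpow_pos_eq x y : 0 < x -> rpow x y = Rpower x y.
Proof. intros H; unfold rpow; destruct (Rle_dec x 0); [lra|reflexivity]. Qed.

Lemma Rpower_pos x y : 0 < Rpower x y.
Proof. unfold Rpower; apply exp_pos. Qed.

Lemma Rpower_cmp t p q : 0 < t -> (p - q) * ln t <= 0 -> Rpower t p <= Rpower t q.
Proof.
  intros Ht H. unfold Rpower.
  assert (p * ln t <= q * ln t) as H0 by nra.
  destruct H0 as [H0|H0]; [left; apply exp_increasing; auto| rewrite H0; lra].
Qed.

Definition lt2 (a b : R * R) : Prop := snd a < snd b.

Fixpoint ins (x : R*R) (l : list (R*R)) : list (R*R) :=
  match l with
  | nil => if Req_EM_T (fst x) 0 then nil else x :: nil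
  | y :: l' =>
    match total_order_T (snd x) (snd y) with
    | inleft (left _) => if Req_EM_T (fst x) 0 then l else x :: l
    | inleft (right _) =>
        if Req_EM_T (fst x + fst y) 0 then l' else (fst x + fst y, snd y) :: l'
    | inright _ => y :: ins x l'
    end
  end.

Lemma ins_val x l t : gen_poly (ins x l) t = fst x * rpow t (snd x) + gen_poly l t.
Proof.
  induction l as [|y l IH]; simpl.
  - destruct (Req_EM_T (fst x) 0) as [e|e]; simpl; [rewrite e|]; ring.
  - destruct (total_order_T (snd x) (snd y)) as [[h|h]|h].
    + destruct (Req_EM_T (fst x) 0) as [e|e]; simpl; [rewrite e|]; ring.
    + destruct (Req_EM_T (fst x + fst y) 0) as [e|e]; simpl; rewrite h.
      * replace (fst y) with (- fst x) by lra. ring.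
      * ring.
    + simpl. rewrite IH. ring.
Qed.

Definition goodcp (cp : R * R) := fst cp <> 0 /\ 0 < snd cp.

Lemma ins_good x l : List.Forall goodcp l -> 0 < snd x -> List.Forall goodcp (ins x l).
Proof.
  induction l as [|y l IH]; intros Hl Hx; simpl.
  - destruct (Req_EM_T (fst x) 0); constructor; auto; split; auto.
  - inversion Hl; subst. destruct (total_order_T (snd x) (snd y)) as [[h|h]|h].
    + destruct (Req_EM_T (fst x) 0); auto. constructor; auto. split; auto.
    + destruct (Req_EM_T (fst x + fst y) 0); auto. constructor; auto.
      split; simpl; auto. destruct H1; auto.
    + constructor; auto.
Qed.

Lemma ins_lt z x l : snd z < snd x -> List.Forall (lt2 z) l -> List.Forall (lt2 z) (ins x l).
Proof.
  induction l as [|y l IH]; intros Hx Hl; simpl.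
  - destruct (Req_EM_T (fst x) 0); auto.
  - inversion Hl; subst. destruct (total_order_T (snd x) (snd y)) as [[h|h]|h].
    + destruct (Req_EM_T (fst x) 0); auto.
    + destruct (Req_EM_T (fst x + fst y) 0); auto.
    + constructor; auto.
Qed.

Lemma Forall_lt2_trans a b l : lt2 a b -> List.Forall (lt2 b) l -> List.Forall (lt2 a) l.
Proof.
  intros H Hl. eapply Forall_impl; [|exact Hl]. unfold lt2 in *; intros; lra.
Qed.

Lemma ins_sorted x l : StronglySorted lt2 l -> StronglySorted lt2 (ins x l).
Proof.
  induction l as [|y l IH]; intros Hl; simpl.
  - destruct (Req_EM_T (fst x) 0); repeat constructor.
  - apply StronglySorted_inv in Hl as [Hs Hf].
    destruct (total_order_T (snd x) (snd y)) as [[h|h]|h].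
    + destruct (Req_EM_T (fst x) 0). constructor; auto.
      constructor; [constructor; auto|]. constructor; [exact h|].
      eapply Forall_lt2_trans; [exact h| exact Hf].
    + destruct (Req_EM_T (fst x + fst y) 0); auto. constructor; auto.
    + constructor; auto. apply ins_lt; auto.
Qed.

Definition nrm (l : list (R*R)) := fold_right ins nil l.

Lemma nrm_spec l : List.Forall goodcp l ->
  List.Forall goodcp (nrm l) /\ StronglySorted lt2 (nrm l) /\
  forall t, gen_poly (nrm l) t = gen_poly l t.
Proof.
  induction l as [|x l IH]; intros Hl; simpl.
  - split; [constructor|split; [constructor|reflexivity]].
  - inversion Hl; subst. destruct (IH H2) as [A [B C]].
    split; [apply ins_good; auto; apply H1|split; [apply ins_sorted; auto|]].
    intros t. rewrite ins_val, C. reflexivity.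
Qed.

Definition sumabs (l : list (R*R)) := fold_right (fun cp acc => Rabs (fst cp) + acc) 0 l.

Lemma sumabs_ge0 l : 0 <= sumabs l.
Proof. induction l; simpl; [lra|]. pose proof (Rabs_pos (fst a)); lra. Qed.

Lemma gen_bound L t b : 0 < t ->
  List.Forall (fun cp => (snd cp - b) * ln t <= 0) L ->
  Rabs (gen_poly L t) <= sumabs L * Rpower t b.
Proof.
  intros Ht. induction L as [|x L IH]; intros HL; simpl.
  - rewrite Rabs_R0; lra.
  - inversion HL; subst. specialize (IH H2).
    rewrite rpow_pos_eq by auto.
    pose proof (Rpower_cmp _ _ _ Ht H1).
    eapply Rle_trans; [apply Rabs_triang|]. rewrite Rabs_mult.
    rewrite (Rabs_right (Rpower t (snd x))) by (left; apply Rpower_pos).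
    pose proof (Rabs_pos (fst x)). nra.
Qed.

Lemma lower_exists (L : list (R*R)) a : List.Forall (fun cp => a < snd cp) L ->
  exists b, a < b /\ List.Forall (fun cp => b <= snd cp) L.
Proof.
  induction L as [|x L IH]; intros H.
  - exists (a+1); split; [lra|constructor].
  - inversion H; subst. destruct (IH H3) as [b [Hb HF]].
    exists (Rmin b (snd x)). split. apply Rmin_glb_lt; auto.
    constructor. apply Rmin_r. eapply Forall_impl; [|exact HF].
    intros cp h; simpl in *. pose proof (Rmin_l b (snd x)); lra.
Qed.

Lemma upper_exists (L : list (R*R)) a : List.Forall (fun cp => snd cp < a) L ->
  exists b, b < a /\ List.Forall (fun cp => snd cp <= b) L.
Proof.
  induction L as [|x L IH]; intros H.
  - exists (a-1); split; [lra|constructor].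
  - inversion H; subst. destruct (IH H3) as [b [Hb HF]].
    exists (Rmax b (snd x)). split. apply Rmax_lub_lt; auto.
    constructor. apply Rmax_r. eapply Forall_impl; [|exact HF].
    intros cp h; simpl in *. pose proof (Rmax_l b (snd x)); lra.
Qed.

Lemma near0 c a (tl : list (R*R)) : c <> 0 -> List.Forall (fun cp => a < snd cp) tl ->
  exists d, 0 < d <= 1 /\ forall t, 0 < t <= d ->
    Rabs (gen_poly tl t) <= Rabs c / 2 * Rpower t a.
Proof.
  intros Hc Htl. destruct (lower_exists _ _ Htl) as [b [Hab Hb]].
  set (S := sumabs tl). pose proof (sumabs_ge0 tl) as HS. fold S in HS.
  pose proof (Rabs_pos_lt _ Hc) as Hc'.
  set (u := Rabs c / (2*S+1)).
  assert (Hu : 0 < u) by (unfold u; apply Rdiv_lt_0_compat; lra).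
  exists (Rmin 1 (Rpower u (1/(b-a)))).
  split. split. apply Rmin_glb_lt; [lra|apply Rpower_pos]. apply Rmin_l.
  intros t [Ht0 Ht].
  assert (Ht1 : t <= 1) by (pose proof (Rmin_l 1 (Rpower u (1/(b-a)))); lra).
  assert (lnt : ln t <= 0) by (rewrite <- ln_1; apply ln_le; lra).
  assert (H1 : Rabs (gen_poly tl t) <= S * Rpower t b).
  { apply gen_bound; auto. eapply Forall_impl; [|exact Hb]. intros cp h; simpl in *. nra. }
  assert (H2 : Rpower t (b-a) <= u).
  { replace u with (Rpower (Rpower u (1/(b-a))) (b-a)).
    apply Rle_Rpower_l; [lra|split; auto]. pose proof (Rmin_r 1 (Rpower u (1/(b-a)))); lra.
    rewrite Rpower_mult. replace (1/(b-a)*(b-a)) with 1 by (field; lra). apply Rpower_1; auto. }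
  replace (Rpower t b) with (Rpower t (b-a) * Rpower t a) in H1
    by (rewrite <- Rpower_plus; f_equal; ring).
  assert (S * u <= Rabs c / 2).
  { assert (Hu2: u * (2*S+1) = Rabs c) by (unfold u; field; lra). nra. }
  pose proof (Rpower_pos t a).
  assert (S * Rpower t (b-a) <= S * u) by (apply Rmult_le_compat_l; auto).
  assert (S * Rpower t (b-a) * Rpower t a <= Rabs c / 2 * Rpower t a)
    by (apply Rmult_le_compat_r; lra).
  lra.
Qed.

Lemma nearinf C A (ini : list (R*R)) : C <> 0 -> List.Forall (fun cp => snd cp < A) ini ->
  exists T, 1 <= T /\ forall t, T <= t ->
    Rabs (gen_poly ini t) <= Rabs C / 2 * Rpower t A.
Proof.
  intros Hc Hini. destruct (upper_exists _ _ Hini) as [b [Hab Hb]].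
  set (S := sumabs ini). pose proof (sumabs_ge0 ini) as HS. fold S in HS.
  pose proof (Rabs_pos_lt _ Hc) as Hc'.
  set (u := (2*S+1) / Rabs C).
  assert (Hu : 0 < u) by (unfold u; apply Rdiv_lt_0_compat; lra).
  exists (Rmax 1 (Rpower u (1/(A-b)))).
  split. apply Rmax_l.
  intros t Ht.
  assert (Ht1 : 1 <= t) by (pose proof (Rmax_l 1 (Rpower u (1/(A-b)))); lra).
  assert (lnt : 0 <= ln t) by (rewrite <- ln_1; apply ln_le; lra).
  assert (H1 : Rabs (gen_poly ini t) <= S * Rpower t b).
  { apply gen_bound; [lra|]. eapply Forall_impl; [|exact Hb]. intros cp h; simpl in *. nra. }
  assert (H2 : u <= Rpower t (A-b)).
  { replace u with (Rpower (Rpower u (1/(A-b))) (A-b)) at 1.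
    apply Rle_Rpower_l; [lra|split; [apply Rpower_pos|]]. pose proof (Rmax_r 1 (Rpower u (1/(A-b)))); lra.
    rewrite Rpower_mult. replace (1/(A-b)*(A-b)) with 1 by (field; lra). apply Rpower_1; auto. }
  replace (Rpower t A) with (Rpower t (A-b) * Rpower t b)
    by (rewrite <- Rpower_plus; f_equal; ring).
  assert (S <= Rabs C / 2 * u).
  { assert (Hu2: u * Rabs C = 2*S+1) by (unfold u; field; lra). nra. }
  pose proof (Rpower_pos t b). pose proof (Rpower_pos t (A-b)).
  assert (S * Rpower t b <= Rabs C / 2 * u * Rpower t b) by (apply Rmult_le_compat_r; lra).
  assert (Rabs C / 2 * u <= Rabs C / 2 * Rpower t (A-b)) by (apply Rmult_le_compat_l; lra).
  assert (Rabs C / 2 * u * Rpower t b <= Rabs C / 2 * Rpower t (A-b) * Rpower t b)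
    by (apply Rmult_le_compat_r; lra).
  lra.
Qed.

Definition gd (L : list (R*R)) t :=
  fold_right (fun cp acc => fst cp * (snd cp * rpow t (snd cp - 1)) + acc) 0 L.

Lemma rpow_derive p t : 0 < t -> is_derive (fun s => rpow s p) t (p * rpow t (p - 1)).
Proof.
  intros Ht. rewrite rpow_pos_eq by auto.
  apply is_derive_ext_loc with (f := fun s => Rpower s p).
  - apply (filter_imp (fun s => 0 < s)). intros s Hs. rewrite rpow_pos_eq; auto.
    apply (open_gt 0 t Ht).
  - apply is_derive_Reals. apply derivable_pt_lim_power; auto.
Qed.

Lemma gen_derive L t : 0 < t -> is_derive (gen_poly L) t (gd L t).
Proof.
  intros Ht. induction L as [|x L IH]; simpl.
  - apply is_derive_ext with (f := fun _ => 0). intros; reflexivity. apply (is_derive_const (K := R_AbsRing) (V := R_NormedModule)).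
  - apply is_derive_ext with (f := fun s => fst x * rpow s (snd x) + gen_poly L s).
    intros; reflexivity.
    apply (is_derive_plus (K := R_AbsRing) (V := R_NormedModule)); auto. apply is_derive_scal. apply rpow_derive; auto.
Qed.

Definition emap (L : list (R*R)) := map (fun cp => (fst cp * snd cp, snd cp)) L.

Lemma emap_val L t : 0 < t -> t * gd L t = gen_poly (emap L) t.
Proof.
  intros Ht. induction L as [|x L IH]; simpl; [ring|].
  rewrite <- IH. rewrite !rpow_pos_eq by auto.
  replace (Rpower t (snd x)) with (Rpower t (snd x - 1) * t).
  ring. replace (snd x) with ((snd x - 1) + 1) at 2 by ring.
  rewrite Rpower_plus, Rpower_1; auto.
Qed.

Lemma sumabs_emap_forall (P : R -> Prop) L :
  List.Forall (fun cp => P (snd cp)) L -> List.Forall (fun cp => P (snd cp)) (emap L).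
Proof.
  induction L; simpl; intros H; constructor; inversion H; subst; auto.
Qed.

Lemma gen_poly_app l1 l2 t : gen_poly (l1 ++ l2) t = gen_poly l1 t + gen_poly l2 t.
Proof. induction l1; simpl; [ring|]. rewrite IHl1; ring. Qed.

Lemma SS_last (ini : list (R*R)) x : StronglySorted lt2 (ini ++ x :: nil) ->
  List.Forall (fun y => lt2 y x) ini.
Proof.
  induction ini as [|y ini IH]; simpl; intros H; constructor.
  - apply StronglySorted_inv in H as [_ H]. apply Forall_app in H as [_ H].
    inversion H; auto.
  - apply IH. apply StronglySorted_inv in H; apply H.
Qed.

Lemma b_analysis (b : R -> R) (L : list (R*R)) : L <> nil ->
  List.Forall goodcp L -> StronglySorted lt2 L ->
  (forall t, 0 < t -> b t = gen_poly L t) -> (forall t, 0 < t -> 0 < b t) ->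
  (forall x y, 0 < x -> x <= y -> b x <= b y) ->
  exists a A k, 0 < a /\ 0 < A /\ 0 < k /\
    List.Forall (fun cp => a <= snd cp <= A) L /\
    (forall t, 0 < t <= 1 -> k * Rpower t a <= b t) /\
    (forall t, 1 <= t -> k * Rpower t A <= b t).
Proof.
  intros Hne Hg Hs Hb Hpos Hmon.
  destruct L as [|[c a] tl]; [congruence|].
  destruct (exists_last Hne) as [ini [[C A] Hini]].
  assert (Hca : c <> 0 /\ 0 < a) by (inversion Hg; subst; exact H1).
  assert (HCA : C <> 0 /\ 0 < A).
  { rewrite Hini in Hg. apply Forall_app in Hg as [_ H]. inversion H; subst; exact H2. }
  destruct Hca as [Hc Ha]; destruct HCA as [HC HA].
  pose proof Hs as Hs'. apply StronglySorted_inv in Hs' as [_ Htl].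
  assert (Htl' : List.Forall (fun cp => a < snd cp) tl).
  { eapply Forall_impl; [|exact Htl]. unfold lt2; simpl; auto. }
  pose proof Hs as Hs2. rewrite Hini in Hs2. apply SS_last in Hs2.
  assert (Hini' : List.Forall (fun cp => snd cp < A) ini).
  { eapply Forall_impl; [|exact Hs2]. unfold lt2; simpl; auto. }
  destruct (near0 c a tl Hc Htl') as [d [Hd Hnd]].
  destruct (nearinf C A ini HC Hini') as [T [HT HnT]].
  assert (Hb0 : forall t, 0 < t -> b t = c * Rpower t a + gen_poly tl t).
  { intros t Ht. rewrite Hb by auto. simpl. rewrite rpow_pos_eq by auto. ring. }
  assert (HbI : forall t, 0 < t -> b t = gen_poly ini t + C * Rpower t A).
  { intros t Ht. rewrite Hb, Hini, gen_poly_app by auto. simpl.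
    rewrite rpow_pos_eq by auto. ring. }
  assert (Hcp : 0 < c).
  { pose proof (Hnd d (conj (proj1 Hd) (Rle_refl d))) as H1.
    pose proof (Hpos d (proj1 Hd)) as H2. rewrite Hb0 in H2 by lra.
    pose proof (Rpower_pos d a).
    destruct (Rtotal_order c 0) as [h|[h|h]]; [|exfalso; auto|lra].
    rewrite (Rabs_left c) in H1 by lra.
    pose proof (Rle_abs (gen_poly tl d)).
    assert (c * Rpower d a < 0) by nra. nra. }
  assert (HCp : 0 < C).
  { pose proof (HnT T (Rle_refl T)) as H1.
    pose proof (Hpos T ltac:(lra)) as H2. rewrite HbI in H2 by lra.
    pose proof (Rpower_pos T A).
    destruct (Rtotal_order C 0) as [h|[h|h]]; [|exfalso; auto|lra].
    rewrite (Rabs_left C) in H1 by lra.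
    pose proof (Rle_abs (gen_poly ini T)).
    assert (C * Rpower T A < 0) by nra. nra. }
  rewrite (Rabs_right c) in Hnd by lra. rewrite (Rabs_right C) in HnT by lra.
  pose proof (Hpos d (proj1 Hd)) as Hbd. pose proof (Hpos 1 ltac:(lra)) as Hb1.
  pose proof (Rpower_pos T A) as HTA.
  set (k0 := Rmin (c/2) (b d)).
  set (k1 := Rmin (C/2) (b 1 / Rpower T A)).
  assert (Hk0 : 0 < k0) by (apply Rmin_glb_lt; [lra|auto]).
  assert (Hk1 : 0 < k1) by (apply Rmin_glb_lt; [lra|apply Rdiv_lt_0_compat; auto]).
  exists a, A, (Rmin k0 k1). split; [auto|split; [auto|split]].
  { apply Rmin_glb_lt; auto. }
  split.
  { apply Forall_forall. intros [y1 y2] Hy. split.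
    - destruct Hy as [Hy|Hy]. injection Hy; intros; subst; simpl; lra.
      rewrite Forall_forall in Htl'. apply Htl' in Hy. simpl in *; lra.
    - rewrite Hini in Hy. apply in_app_or in Hy. destruct Hy as [Hy|[Hy|[]]].
      + rewrite Forall_forall in Hini'. apply Hini' in Hy. simpl in *; lra.
      + injection Hy; intros; subst; simpl; lra. }
  split.
  - intros t [Ht0 Ht1].
    pose proof (Rmin_l k0 k1). pose proof (Rpower_pos t a).
    assert (k0 * Rpower t a <= b t).
    { destruct (Rle_dec t d) as [h|h].
      + pose proof (Hnd t (conj Ht0 h)). rewrite Hb0 by auto.
        pose proof (Rabs_maj2 (gen_poly tl t)).
        pose proof (Rmin_l (c/2) (b d)) as Hm; fold k0 in Hm.
        assert (k0 * Rpower t a <= c/2 * Rpower t a) by (apply Rmult_le_compat_r; lra).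
        lra.
      + assert (Rpower t a <= 1).
        { rewrite <- (Rpower_O t) by auto. apply Rpower_cmp; auto.
          assert (ln t <= 0) by (rewrite <- ln_1; apply ln_le; lra). nra. }
        pose proof (Rmin_r (c/2) (b d)) as Hm; fold k0 in Hm.
        pose proof (Hmon d t (proj1 Hd) ltac:(lra)).
        assert (k0 * Rpower t a <= k0) by nra. lra. }
    assert (Rmin k0 k1 * Rpower t a <= k0 * Rpower t a) by (apply Rmult_le_compat_r; lra).
    lra.
  - intros t Ht.
    pose proof (Rmin_r k0 k1). pose proof (Rpower_pos t A).
    assert (k1 * Rpower t A <= b t).
    { destruct (Rle_dec T t) as [h|h].
      + pose proof (HnT t h). rewrite HbI by lra.
        pose proof (Rmin_l (C/2) (b 1 / Rpower T A)) as Hm; fold k1 in Hm.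
        assert (k1 * Rpower t A <= C/2 * Rpower t A) by (apply Rmult_le_compat_r; lra).
        pose proof (Rabs_maj2 (gen_poly ini t)).
        lra.
      + assert (Rpower t A <= Rpower T A) by (apply Rle_Rpower_l; lra).
        pose proof (Rmin_r (C/2) (b 1 / Rpower T A)) as Hm; fold k1 in Hm.
        pose proof (Hmon 1 t ltac:(lra) Ht).
        assert (k1 * Rpower t A <= k1 * Rpower T A) by (apply Rmult_le_compat_l; lra).
        assert (k1 * Rpower T A <= b 1 / Rpower T A * Rpower T A) by (apply Rmult_le_compat_r; lra).
        replace (b 1 / Rpower T A * Rpower T A) with (b 1) in * by (field; lra).
        lra. }
    assert (Rmin k0 k1 * Rpower t A <= k1 * Rpower t A) by (apply Rmult_le_compat_r; lra).
    lra.
Qed.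

Lemma key_ineq t s D k E a p c : 0 < t -> 0 < s -> 0 < D -> 0 < k -> 0 < E -> 0 < p -> 0 < c ->
  k * Rpower t a <= s -> t * D <= E * Rpower t a ->
  c * Rpower k p / E * Rpower t (a*p - a + 1) <= c * Rpower s p / D.
Proof.
  intros Ht Hs HD Hk HE Hp Hc H1 H2.
  pose proof (Rpower_pos t a) as Ha.
  assert (H3 : Rpower k p * Rpower t (a*p) <= Rpower s p).
  { rewrite <- Rpower_mult, Rpower_mult_distr by (auto; apply Rpower_pos).
    apply Rle_Rpower_l; [lra|split; auto]. apply Rmult_lt_0_compat; auto. }
  assert (H4 : Rpower t (a*p - a + 1) = Rpower t (a*p) * t / Rpower t a).
  { replace (a*p - a + 1) with (a*p + 1 + - a) by ring.
    rewrite !Rpower_plus, Rpower_Ropp, Rpower_1 by auto. field. lra. }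
  rewrite H4.
  pose proof (Rpower_pos k p). pose proof (Rpower_pos t (a*p)).
  assert (H5 : t / (E * Rpower t a) <= / D).
  { apply (Rmult_le_reg_r (E * Rpower t a * D)). apply Rmult_lt_0_compat; [nra|auto].
    field_simplify; try lra. }
  assert (H6 : c * Rpower k p / E * (Rpower t (a*p) * t / Rpower t a)
    = c * (Rpower k p * Rpower t (a*p)) * (t / (E * Rpower t a))) by (field; lra).
  rewrite H6. change (c * Rpower s p / D) with (c * Rpower s p * / D).
  assert (0 <= t / (E * Rpower t a)) by (apply Rlt_le, Rdiv_lt_0_compat; nra).
  apply Rmult_le_compat; auto.
  - apply Rmult_le_pos; nra.
  - apply Rmult_le_compat_l; lra.
Qed.

Lemma cont_of_within (g : R -> R) s : 0 < s ->
  filterlim g (within (fun y => 0 <= y) (locally s)) (locally (g s)) ->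
  continuity_pt g s.
Proof.
  intros Hs H. apply continuity_pt_filterlim. intros P HP.
  specialize (H P HP). unfold filtermap, within in *.
  generalize (filter_and _ _ H (open_gt 0 s Hs)). apply filter_imp.
  intros y [h1 h2]. apply h1. lra.
Qed.

Theorem lemma6 (gamma Psi : R -> R) :
  K_Pinv gamma -> K_FxT Psi ->
  exists (lambda : R) (Psit : R -> R),
    1 <= lambda /\ K_FxT Psit /\
    forall s, 0 < s ->
      lambda * rpow (gamma s) (lambda - 1) * Derive gamma s * Psi s
      >= Psit (rpow (gamma s) lambda).
Proof.
  intros [Kg [b [[Kb [l [Hl [Hbl Hder]]]] [Hbg Hgb]]]]
         [c1 [c2 [p1 [p2 [Hc1 [Hc2 [Hp1 [Hp2 HPsi]]]]]]]].
  destruct Kg as [g0 [gnn [gcont [ginc gunb]]]].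
  destruct Kb as [b0 [bnn [bcont [binc bunb]]]].
  destruct (nrm_spec l Hl) as [HgL [HsL HvL]].
  set (L := nrm l) in *.
  assert (HbL : forall t, 0 < t -> b t = gen_poly L t).
  { intros t Ht. rewrite HvL, Hbl; auto; lra. }
  assert (bpos : forall t, 0 < t -> 0 < b t).
  { intros t Ht. rewrite <- b0. apply binc; lra. }
  assert (bmon : forall x y, 0 < x -> x <= y -> b x <= b y).
  { intros x y Hx [h|h]; [left; apply binc; lra|subst; lra]. }
  assert (HLne : L <> nil).
  { intros E. pose proof (bpos 1 ltac:(lra)). rewrite HbL in H by lra.
    rewrite E in H. simpl in H. lra. }
  destruct (b_analysis b L HLne HgL HsL HbL bpos bmon)
    as [a [A [k [Ha [HA [Hk [HaA [Hlow Hhigh]]]]]]]].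
  assert (Hbd : forall t, 0 < t -> is_derive b t (gd L t)).
  { intros t Ht. apply is_derive_ext_loc with (f := gen_poly L).
    - apply (filter_imp (fun s => 0 < s)). intros s Hs. symmetry; auto.
      apply (open_gt 0 t Ht).
    - apply gen_derive; auto. }
  assert (HgdP : forall t, 0 < t -> 0 < gd L t).
  { intros t Ht. rewrite <- (is_derive_unique _ _ _ (Hbd t Ht)). auto. }
  set (E := sumabs (emap L) + 1).
  pose proof (sumabs_ge0 (emap L)) as HE0.
  assert (HEp : 0 < E) by (unfold E; lra).
  assert (HE1 : forall t, 0 < t <= 1 -> t * gd L t <= E * Rpower t a).
  { intros t [Ht0 Ht1]. rewrite emap_val by auto.
    assert (ln t <= 0) by (rewrite <- ln_1; apply ln_le; lra).
    eapply Rle_trans; [apply Rle_abs|]. eapply Rle_trans; [apply gen_bound; auto|].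
    - apply sumabs_emap_forall with (P := fun p => (p - a) * ln t <= 0).
      eapply Forall_impl; [|exact HaA]. intros cp h; simpl in *. nra.
    - pose proof (Rpower_pos t a). unfold E. nra. }
  assert (HE2 : forall t, 1 <= t -> t * gd L t <= E * Rpower t A).
  { intros t Ht. rewrite emap_val by lra.
    assert (0 <= ln t) by (rewrite <- ln_1; apply ln_le; lra).
    eapply Rle_trans; [apply Rle_abs|]. eapply Rle_trans; [apply gen_bound; try lra|].
    - apply sumabs_emap_forall with (P := fun p => (p - A) * ln t <= 0).
      eapply Forall_impl; [|exact HaA]. intros cp h; simpl in *. nra.
    - pose proof (Rpower_pos t A). unfold E. nra. }
  set (r := a * p1 - a + 1).
  set (q1 := (1 + Rmax r 0) / 2).
  set (q2 := A * p2 - A + 1).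
  assert (Hr : r < 1) by (unfold r; nra).
  assert (Hq1 : 0 < q1 < 1 /\ r <= q1).
  { unfold q1. pose proof (Rmax_l r 0). pose proof (Rmax_r r 0).
    assert (Rmax r 0 < 1) by (apply Rmax_lub_lt; lra). lra. }
  assert (Hq2 : 1 < q2) by (unfold q2; nra).
  set (K0 := c1 * Rpower k p1 / E).
  set (K1 := c2 * Rpower k p2 / E).
  assert (HK0 : 0 < K0) by (unfold K0; apply Rdiv_lt_0_compat; [apply Rmult_lt_0_compat; [lra|apply Rpower_pos]|lra]).
  assert (HK1 : 0 < K1) by (unfold K1; apply Rdiv_lt_0_compat; [apply Rmult_lt_0_compat; [lra|apply Rpower_pos]|lra]).
  set (kk := Rmin K0 K1 / 2).
  assert (Hkk : 0 < kk) by (unfold kk; pose proof (Rmin_glb_lt K0 K1 0 HK0 HK1); lra).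
  exists 1, (fun u => kk * rpow u q1 + kk * rpow u q2).
  split; [lra|split].
  { exists kk, kk, q1, q2. repeat split; try lra. }
  intros s Hs.
  set (t := gamma s).
  assert (Ht : 0 < t) by (unfold t; rewrite <- g0; apply ginc; lra).
  assert (Hst : b t = s) by (apply Hbg; lra).
  assert (Hdg : Derive gamma s = 1 / gd L t).
  { assert (Prf : forall a0, gamma (s/2) <= a0 <= gamma (2*s) -> derivable_pt b a0).
    { intros a0 Ha0. assert (0 < a0).
      { eapply Rlt_le_trans; [|apply Ha0]. rewrite <- g0. apply ginc; lra. }
      exists (gd L a0). apply is_derive_Reals. apply Hbd; auto. }
    assert (Hinc : gamma (s/2) <= gamma s <= gamma (2*s)).
    { split; left; apply ginc; lra. }
    assert (Hc : continuity_pt gamma s) by (apply cont_of_within; auto; apply gcont; lra).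
    assert (Hid : forall x0, s/2 <= x0 <= 2*s -> comp b gamma x0 = id x0).
    { intros x0 Hx0. unfold comp, id. apply Hbg; lra. }
    assert (Heq : derive_pt b (gamma s) (Prf (gamma s) Hinc) = gd L t).
    { apply derive_pt_eq_0. apply is_derive_Reals. apply Hbd; auto. }
    assert (Hne : derive_pt b (gamma s) (Prf (gamma s) Hinc) <> 0).
    { rewrite Heq. pose proof (HgdP t Ht). lra. }
    pose proof (Ranalysis5.derivable_pt_lim_recip_interv b gamma (s/2) (2*s) s Prf Hc
                  ltac:(lra) ltac:(lra) Hinc Hid Hne) as HH.
    rewrite Heq in HH. apply is_derive_unique. apply is_derive_Reals. exact HH. }
  rewrite Hdg. fold t.
  replace (1 - 1) with 0 by ring.
  rewrite !(rpow_pos_eq t) by auto. rewrite Rpower_O, Rpower_1 by auto.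
  rewrite HPsi by lra. rewrite !rpow_pos_eq by lra.
  rewrite <- Hst.
  set (D := gd L t). assert (HD : 0 < D) by (apply HgdP; auto).
  pose proof (bpos t Ht) as Hbt.
  pose proof (Rpower_pos (b t) p1). pose proof (Rpower_pos (b t) p2).
  assert (Hsplit : 1 * 1 * (1 / D) * (c1 * Rpower (b t) p1 + c2 * Rpower (b t) p2)
     = c1 * Rpower (b t) p1 / D + c2 * Rpower (b t) p2 / D) by (field; lra).
  rewrite Hsplit.
  assert (0 <= c1 * Rpower (b t) p1 / D) by (apply Rlt_le, Rdiv_lt_0_compat; nra).
  assert (0 <= c2 * Rpower (b t) p2 / D) by (apply Rlt_le, Rdiv_lt_0_compat; nra).
  pose proof (Rmin_l K0 K1). pose proof (Rmin_r K0 K1).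
  pose proof (Rpower_pos t q1). pose proof (Rpower_pos t q2).
  destruct (Rle_dec t 1) as [h|h].
  - assert (lnt : ln t <= 0) by (rewrite <- ln_1; apply ln_le; lra).
    assert (H12 : Rpower t q2 <= Rpower t q1) by (apply Rpower_cmp; auto; nra).
    assert (Hr1 : Rpower t q1 <= Rpower t r) by (apply Rpower_cmp; auto; nra).
    pose proof (key_ineq t (b t) D k E a p1 c1 Ht Hbt HD Hk ltac:(lra) ltac:(lra) Hc1
                  (Hlow t (conj Ht h)) (HE1 t (conj Ht h))) as HK.
    fold K0 in HK. fold r in HK.
    assert (kk * Rpower t q2 <= kk * Rpower t q1) by (apply Rmult_le_compat_l; lra).
    assert (2 * kk * Rpower t q1 <= K0 * Rpower t q1) by (apply Rmult_le_compat_r; unfold kk; lra).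
    assert (K0 * Rpower t q1 <= K0 * Rpower t r) by (apply Rmult_le_compat_l; lra).
    lra.
  - assert (lnt : 0 <= ln t) by (rewrite <- ln_1; apply ln_le; lra).
    assert (H12 : Rpower t q1 <= Rpower t q2) by (apply Rpower_cmp; auto; nra).
    pose proof (key_ineq t (b t) D k E A p2 c2 Ht Hbt HD Hk ltac:(lra) ltac:(lra) Hc2
                  (Hhigh t ltac:(lra)) (HE2 t ltac:(lra))) as HK.
    fold K1 in HK. fold q2 in HK.
    assert (kk * Rpower t q1 <= kk * Rpower t q2) by (apply Rmult_le_compat_l; lra).
    assert (2 * kk * Rpower t q2 <= K1 * Rpower t q2) by (apply Rmult_le_compat_r; unfold kk; lra).
    lra.
Qed.
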